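(* Let $(x_n)_{n\ge1}$ be a sequence of integers. Then the set $$A=\Big\{\alpha\in\mathbb{R} : \delta_{\min}^{\alpha}(N)<\frac{1}{N^{2-o(1)}}\Big\}$$ either has Lebesgue measure zero or has full Lebesgue measure (its complement has measure zero).
   Context: For $x\in\mathbb{R}$, $\|x\|=\min_{k\in\mathbb{Z}}|x-k|$. For $\alpha\in\mathbb{R}$, $\delta_{\min}^{\alpha}(N)=\min\{\|\alpha x_m-\alpha x_n\| : 1\le m,n\le N,\ m\ne n\}$. The condition $\delta_{\min}^{\alpha}(N)<\frac{1}{N^{2-o(1)}}$ means there is a function $f_\alpha(N)\to0$ as $N\to\infty$ such that $\delta_{\min}^{\alpha}(N)<N^{-(2-f_\alpha(N))}$ for all sufficiently large $N$. *)

(* Defs.v *)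
From HB Require Import structures.
From mathcomp Require Import all_boot all_order all_algebra.
From mathcomp Require Import all_classical all_reals all_analysis.
Set Implicit Arguments. Unset Strict Implicit. Unset Printing Implicit Defensive.
Import Order.TTheory GRing.Theory Num.Theory.
Local Open Scope classical_set_scope.
Local Open Scope ring_scope.

(* ||x|| = min_{k in Z} |x - k| = min (x - floor x, ceil x - x) *)
Definition distZ {R : realType} (x : R) : R :=
  Num.min (x - (Num.floor x)%:~R) ((Num.ceil x)%:~R - x).

(* delta_min^alpha(N) = min { ||alpha x_m - alpha x_n|| : 1 <= m,n <= N, m <> n }.
   (For N < 2 the set is empty and the value is the default 1; irrelevant,
   only large N matter.) *)
Definition delta_min {R : realType} (x : nat -> int) (alpha : R) (N : nat) : R :=
  \big[Num.min/1]_(1 <= m < N.+1)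
    \big[Num.min/1]_(1 <= n < N.+1 | m != n)
       distZ (alpha * (x m)%:~R - alpha * (x n)%:~R).

Definition small_gaps {R : realType} (x : nat -> int) (alpha : R) : Prop :=
  exists f : nat -> R, f n @[n --> \oo] --> 0%R /\
    \forall N \near \oo, delta_min x alpha N < (N%:R) `^ (- (2 - f N)).

(* Main.v *)
Require Import Defs.
From HB Require Import structures.
From mathcomp Require Import all_boot all_order all_algebra.
From mathcomp Require Import all_classical all_reals all_analysis.
From mathcomp Require Import measurable_realfun lebesgue_integral_differentiation.
From mathcomp Require Import ring lra zify.
Import Order.TTheory GRing.Theory Num.Theory numFieldNormedType.Exports.
Local Open Scope classical_set_scope.
Local Open Scope ring_scope.
Section D.
Context {R : realType}.

Lemma floor_le_ceil1 (y : R) : Num.ceil y <= Num.floor y + 1.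
Proof. by rewrite ceil_floor lerD2l; case: (_ \isn't a _). Qed.

Lemma distZ_le (y : R) (j : int) : distZ y <= `|y - j%:~R|.
Proof.
rewrite /distZ ge_min; apply/orP.
have h1 := floor_le_tmp y. have h2 := ceil_ge y.
case: (leP j (Num.floor y)) => hj.
- left; have : j%:~R <= (Num.floor y)%:~R :> R by rewrite ler_int.
  move=> h; rewrite ger0_norm; lra.
- right; have : Num.ceil y <= j.
    by apply: le_trans (floor_le_ceil1 y) _; rewrite -ltzD1 ltrD2r. 
  rewrite -(ler_int R) => h; rewrite ler0_norm; lra.
Qed.

Lemma distZ_ex (y : R) : exists j : int, distZ y = `|y - j%:~R|.
Proof.
have h1 := floor_le_tmp y. have h2 := ceil_ge y.
rewrite /distZ; case: (leP (y - (Num.floor y)%:~R) ((Num.ceil y)%:~R - y)) => h.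
  by exists (Num.floor y); rewrite ger0_norm // subr_ge0.
- by exists (Num.ceil y); rewrite ler0_norm ?opprB // subr_le0.
Qed.

Lemma distZ_ge0 (y : R) : 0 <= distZ y.
Proof. by have [j ->] := distZ_ex y. Qed.

Lemma distZ_lip (a b : R) : distZ a <= distZ b + `|a - b|.
Proof.
have [j ->] := distZ_ex b.
apply: le_trans (distZ_le a j) _.
have -> : a - j%:~R = (a - b) + (b - j%:~R) by rewrite addrA subrK.
by rewrite addrC ler_normD.
Qed.

Lemma distZ_addz (y : R) (m : int) : distZ (y + m%:~R) = distZ y.
Proof.
apply/eqP; rewrite eq_le; apply/andP; split.
- have [j ->] := distZ_ex y.
  apply: le_trans (distZ_le _ (j + m)) _; rewrite intrD.
  by rewrite (_ : y + m%:~R - (j%:~R + m%:~R) = y - j%:~R) //; ring.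
- have [j ->] := distZ_ex (y + m%:~R).
  apply: le_trans (distZ_le _ (j - m)) _; rewrite intrB.
  by rewrite (_ : y - (j%:~R - m%:~R) = y + m%:~R - j%:~R) //; ring.
Qed.

Lemma distZ_mulz (y : R) (k : int) : 0 <= k -> distZ (k%:~R * y) <= k%:~R * distZ y.
Proof.
move=> k0; have [j ->] := distZ_ex y.
apply: le_trans (distZ_le _ (k * j)) _.
by rewrite intrM -mulrBr normrM ger0_norm ?ler0z.
Qed.

Lemma distZ_cont : continuous (fun y : R => distZ y).
Proof.
move=> y; apply/cvgrPdist_le => e e0; near=> z.
have h1 := distZ_lip y z. have h2 := distZ_lip z y.
rewrite distrC in h2.
have : `|y - z| <= e by near: z; exists e => // t /= h; exact: ltW.
move=> h3; rewrite ler_norml; apply/andP; split; lra.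
Unshelve. all: by end_near.
Qed.

Lemma min_mul_le (c a1 a2 b1 b2 : R) : 0 <= c -> a1 <= c * b1 -> a2 <= c * b2 ->
  Num.min a1 a2 <= c * Num.min b1 b2.
Proof.
move=> c0 h1 h2; case: (leP b1 b2) => h.
- by rewrite ge_min h1.
- by rewrite ge_min h2 orbT.
Qed.

Lemma delta_min_scale (x : nat -> int) (a : R) (k m : int) (N : nat) : 0 < k ->
  delta_min x (k%:~R * a + m%:~R) N <= k%:~R * delta_min x a N.
Proof.
move=> k0; have k1 : 1 <= k%:~R :> R by rewrite ler1z.
have kp : 0 <= k%:~R :> R by rewrite ler0z ltW.
rewrite /delta_min; apply: (big_ind2 (fun u v => u <= k%:~R * v)).
- by rewrite mulr1.
- by move=> ? ? ? ?; apply: min_mul_le.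
move=> i _; apply: (big_ind2 (fun u v => u <= k%:~R * v)).
- by rewrite mulr1.
- by move=> ? ? ? ?; apply: min_mul_le.
move=> j _.
have -> : (k%:~R * a + m%:~R) * (x i)%:~R - (k%:~R * a + m%:~R) * (x j)%:~R
   = k%:~R * (a * (x i)%:~R - a * (x j)%:~R) + (m * (x i - x j))%:~R.
  by rewrite intrM intrB; ring.
by rewrite distZ_addz; apply: distZ_mulz; rewrite ltW.
Qed.

Lemma measurable_bigmin (I : Type) (s : seq I) (P : pred I) (F : I -> R -> R) :
  (forall i, measurable_fun setT (F i)) ->
  measurable_fun setT (fun a => \big[Num.min/1]_(i <- s | P i) F i a).
Proof.
move=> mF; elim: s => [|i s IH].
  by under eq_fun do rewrite big_nil; exact: measurable_cst.
under eq_fun do rewrite big_cons.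
case: (P i) => //=.
exact: measurable_minr.
Qed.

Lemma measurable_delta_min (x : nat -> int) (N : nat) :
  measurable_fun setT (fun a : R => delta_min x a N).
Proof.
rewrite /delta_min; apply: measurable_bigmin => i.
apply: measurable_bigmin => j.
apply: (measurableT_comp (f := fun y : R => distZ y) (g := fun a : R => a * (x i)%:~R - a * (x j)%:~R)).
  exact: continuous_measurable_fun distZ_cont.
by apply: measurable_funB; apply: measurable_funM.
Qed.
End D.
Section G.
Context {R : realType}.

Lemma ev_ln_ge (c : R) : \forall N \near \oo, c <= ln (N%:R : R).
Proof.
have H := (cvgryPge _).1 (@cvgr_idn R) (expR c).
near=> N.
have h : expR c <= (N%:R : R) by near: N; exact: H.
have Np : 0 < (N%:R : R) by apply: lt_le_trans h; exact: expR_gt0.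
by rewrite -[X in X <= _]expRK ler_ln// posrE expR_gt0.
Unshelve. all: by end_near.
Qed.

Lemma ev_inv_le (e : R) : 0 < e -> \forall N \near \oo, (N.+1%:R : R)^-1 <= e.
Proof.
move=> e0; have H := near_infty_natSinv_lt (PosNum e0).
near=> N; apply: ltW; near: N; exact: H.
Unshelve. all: by end_near.
Qed.

Definition Sp (x : nat -> int) (a : R) := forall j : nat,
  \forall N \near \oo, delta_min x a N < (N%:R : R) `^ (- (2 - (j.+1%:R)^-1)).

Lemma small_gapsP x (a : R) : small_gaps x a <-> Sp x a.
Proof.
split.
- move=> [f [hf hev]] j.
  have j0 : 0 < (j.+1%:R : R)^-1 by rewrite invr_gt0 ltr0n.
  move/cvgrPdist_le : hf => /(_ _ j0) hfj.
  near=> N.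
  have h1 : delta_min x a N < (N%:R : R) `^ (- (2 - f N)) by near: N.
  apply: lt_le_trans h1 _; apply: ler_powR.
    rewrite ler1n; near: N; exact: nbhs_infty_ge.
  have : `|0 - f N| <= (j.+1%:R : R)^-1 by near: N.
  rewrite sub0r normrN => h2; by rewrite lerN2 lerD2l lerN2; exact: le_trans (ler_norm _) h2.
- move=> H.
  pose d N := delta_min x a N.
  pose f N := if 0 < d N then Num.max 0 (2 + ln (d N) / ln (N%:R : R)) + (N.+1%:R : R)^-1
              else (N.+1%:R : R)^-1.
  have f0 N : 0 <= f N.
    rewrite /f; case: ifP => _; last by rewrite invr_ge0.
    by rewrite addr_ge0 ?invr_ge0// le_max lexx.
  exists f; split.
  + apply/cvgrPdist_le => e e0.
    have e2 : 0 < e / 2 by rewrite divr_gt0.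
    pose j := Num.trunc (2 / e).
    have hj : (j.+1%:R : R)^-1 < e / 2.
      have := trunc_itv (ltW (divr_gt0 (ltr0n _ 2) e0)) => /andP[_ h].
      rewrite -(invrK (e / 2)) ltf_pV2 ?posrE ?invr_gt0 ?ltr0n//.
      by rewrite invf_div.
    near=> N.
    rewrite sub0r normrN ger0_norm //.
    have hN : (N.+1%:R : R)^-1 <= e / 2 by near: N; exact: ev_inv_le.
    rewrite /f; case: ifP => dpos; last by move: hN; set c := (N.+1%:R : R)^-1; lra.
    have lnN : 0 < ln (N%:R : R).
      apply: ln_gt0; rewrite ltr1n; near: N; exact: nbhs_infty_gt.
    have hd : d N < (N%:R : R) `^ (- (2 - (j.+1%:R)^-1)) by near: N; exact: H.
    have : ln (d N) < - (2 - (j.+1%:R)^-1) * ln (N%:R : R).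
      rewrite -ln_powR ltr_ln ?posrE ?powR_gt0 ?ltr0n //; near: N; exact: nbhs_infty_gt.
    rewrite -ltr_pdivrMr// => h.
    have : Num.max 0 (2 + ln (d N) / ln (N%:R : R)) <= (j.+1%:R : R)^-1.
      rewrite ge_max ltW//=; move: h; set c := (j.+1%:R : R)^-1; lra.
    move: hN hj; set c := (j.+1%:R : R)^-1; set c' := (N.+1%:R : R)^-1; lra.
  + near=> N.
    have lnN : 0 < ln (N%:R : R).
      apply: ln_gt0; rewrite ltr1n; near: N; exact: nbhs_infty_gt.
    have N2 : (1 < N)%N by near: N; exact: nbhs_infty_gt.
    have Np : (N%:R : R) != 0 by rewrite pnatr_eq0 -lt0n (ltn_trans _ N2).
    rewrite /powR (negbTE Np) -/(d N) /f; case: ifP => dpos; last first.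
      by apply: (le_lt_trans _ (expR_gt0 _)); rewrite leNgt dpos.
    rewrite -[X in X < _]lnK ?posrE// ltr_expR.
    set L := ln (N%:R : R); set D := ln (d N); set c' := (N.+1%:R : R)^-1.
    have c'0 : 0 < c' by rewrite invr_gt0 ltr0n.
    have hm : 2 + D / L <= Num.max 0 (2 + D / L) by rewrite le_max lexx orbT.
    have h1 : D / L + c' <= - (2 - (Num.max 0 (2 + D / L) + c')) by lra.
    apply: lt_le_trans (ler_wpM2r (ltW lnN) h1).
    by rewrite mulrDl divfK ?gt_eqF// ltrDl mulr_gt0.
Unshelve. all: by end_near.
Qed.

Lemma Sp_scale x (a : R) (k m : int) : 0 < k -> Sp x a -> Sp x (k%:~R * a + m%:~R).
Proof.
move=> k0 H j.
have kp : 0 < k%:~R :> R by rewrite ltr0z.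
set c : R := j.+1%:R.
have c0 : 0 < c by rewrite ltr0n.
have e2 : ((j.*2.+1).+1%:R : R) = 2 * c by rewrite /c -natrM mul2n doubleS.
have H2 := H j.*2.+1; rewrite e2 in H2.
have L := ev_ln_ge (2 * c * ln (k%:~R : R)).
near=> N.
have N2 : (1 < N)%N by near: N; exact: nbhs_infty_gt.
have Np : 0 < (N%:R : R) by rewrite ltr0n (ltn_trans _ N2).
have h1 : delta_min x a N < (N%:R : R) `^ (- (2 - (2 * c)^-1)) by near: N; exact: H2.
have h2 : 2 * c * ln (k%:~R : R) <= ln (N%:R : R) by near: N; exact: L.
apply: le_lt_trans (@delta_min_scale R x a k m N k0) _.
have h3 : k%:~R * delta_min x a N < k%:~R * (N%:R : R) `^ (- (2 - (2 * c)^-1)) by rewrite ltr_pM2l.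
apply: lt_le_trans h3 _.
have -> : - (2 - c^-1) = - (2 - (2 * c)^-1) + (2 * c)^-1.
  rewrite invfM; field; rewrite gt_eqF//.
have Nn0 : (N%:R : R) != 0 by rewrite gt_eqF.
rewrite powRD ?Nn0 ?implybT// [X in _ <= X]mulrC ler_pM2r ?powR_gt0//.
rewrite -ler_ln ?posrE ?powR_gt0// ln_powR.
by rewrite mulrC ler_pdivlMr ?mulr_gt0// mulrC.
Unshelve. all: by end_near.
Qed.

Lemma near_oo_ex (P : nat -> Prop) : (\forall N \near \oo, P N) <-> exists M, forall N, (M <= N)%N -> P N.
Proof. split. by case => M _ HM; exists M => N /HM. by case=> M HM; exists M => // N /HM. Qed.

Lemma measurable_Sp x : measurable [set a : R | Sp x a].
Proof.
pose U (j N : nat) := [set a : R | delta_min x a N < (N%:R : R) `^ (- (2 - (j.+1%:R)^-1))].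
have mU j N : measurable (U j N).
  rewrite /U (_ : [set a | _] = setT `&` (fun a => delta_min x a N) @^-1` `]-oo, (N%:R : R) `^ (- (2 - (j.+1%:R)^-1))[); last first.
    by apply/seteqP; split => a /=; [move=> h; split => //; rewrite in_itv /= | case=> _; rewrite in_itv /=].
  by apply: measurable_delta_min => //; exact: measurable_itv.
pose V (j M N : nat) := if (M <= N)%N then U j N else setT.
have -> : [set a | Sp x a] = \bigcap_j \bigcup_M \bigcap_N V j M N.
  apply/seteqP; split => a /=.
  - move=> H j _; have [M HM] := (near_oo_ex _).1 (H j).
    by exists M => // N _; rewrite /V; case: ifP => // /HM.
  - move=> H j; apply/near_oo_ex; have [M _ HM] := H j I.
    exists M => N MN; have := HM N I; by rewrite /V MN.
apply: bigcapT_measurable => j; apply: bigcupT_measurable => M.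
apply: bigcapT_measurable => N; rewrite /V; case: ifP => _ //.
Qed.
End G.
Section S.
Context {R : realType}.
Local Notation mu := (@lebesgue_measure R).

Definition pfm (f : R -> R) (mf : measurable_fun [set: R] f) : {measure set (measurableTypeR R) -> \bar R}.
refine (pushforward mu (f : R -> measurableTypeR R) : {measure set (measurableTypeR R) -> \bar R}). exact: mf. Defined.

Lemma pfmE f mf A : @pfm f mf A = mu (f @^-1` A). Proof. by []. Qed.

Lemma affine_preimage_measure (k m : R) (E : set R) : 0 < k -> measurable E ->
  mu [set b | E ((b - m) / k)] = (k%:E * mu E)%E.
Proof.
move=> k0 mE.
have mh : measurable_fun [set: R] (fun b : R => (b - m) / k).
  apply: measurable_funM => //.
  apply: measurable_funB => //.
have ki : 0 <= k^-1 by rewrite invr_ge0 ltW.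
have := (@lebesgue_measure_unique R (mscale (NngNum ki) (@pfm _ mh) : {measure set (measurableTypeR R) -> \bar R})).
move=> /(_ _) H.
have {}H : forall A, measurable A -> mu A = (k^-1%:E * mu [set b : R | A ((b - m) / k)%R])%E.
  move=> A mA; rewrite H//.
  move=> _ [[a b] _ <-] /=; rewrite /mscale pfmE.
  transitivity (mu `]a, b]); first by congr (mu _).
  transitivity ((k^-1)%:E * mu `](k * a + m)%R, (k * b + m)%R])%E; last first.
    congr (_ * mu _)%E; apply/seteqP; split => y /=; rewrite !in_itv /= ?ler_pdivlMr ?ltr_pdivrMr ?ler_pdivrMr ?ltr_pdivlMr //.
      by rewrite [a * k]mulrC [b * k]mulrC => /andP[h1 h2]; apply/andP; split; lra.
    by rewrite [a * k]mulrC [b * k]mulrC => /andP[h1 h2]; apply/andP; split; lra.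
  rewrite !lebesgue_measure_itv /= !lte_fin ltrD2r ltr_pM2l//.
  case: ifP => _; last by rewrite mule0.
  by rewrite -EFinD -EFinM; congr (_%:E); field; rewrite gt_eqF.
  exact: measurable_id.
rewrite (H E mE) muleA -EFinM mulfV ?gt_eqF// mul1e.
by [].
Qed.
End S.
Section K.
Context {R : realType}.
Local Notation mu := (@lebesgue_measure R).

Lemma cover_step (S : set R) (x0 r kR c b : R) (k : int) :
  (forall a (k m : int), 0 < k -> S a -> S (k%:~R * a + m%:~R)) ->
  0 < k -> kR = k%:~R -> 0 < r -> 1 < 2 * r * kR ->
  ~ S b -> c <= b < c + 1 ->
  let m0 := Num.ceil (c - kR * x0 + kR * r) - 1 in
  (ball x0 r `\` S) ((b - m0%:~R) / kR) \/ (ball x0 r `\` S) ((b - (m0 + 1)%:~R) / kR).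
Proof.
move=> inv k0 kE r0 hk nSb /andP[cb bc] m0.
have kp : 0 < kR by rewrite kE ltr0z.
set t := b - kR * x0 + kR * r.
set m := Num.ceil t - 1.
have hm : (m%:~R < t <= m%:~R + 1).
  have := ceil_itv t; rewrite /m intrB /=.
  by move=> /andP[h1 h2]; rewrite h1 /= subrK.
have good : (ball x0 r `\` S) ((b - m%:~R) / kR).
  split.
  - rewrite /ball /= /ball_ /=.
    have : kR * x0 - kR * r < b - m%:~R < kR * x0 + kR * r.
      move: hm; rewrite /t => /andP[h1 h2]; apply/andP; split; lra.
    move=> /andP[h1 h2].
    have e1 : x0 - r < (b - m%:~R) / kR by rewrite ltr_pdivlMr// mulrBl ![_ * kR]mulrC.
    have e2 : (b - m%:~R) / kR < x0 + r by rewrite ltr_pdivrMr// mulrDl ![_ * kR]mulrC.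
    rewrite ltr_norml; apply/andP; split; lra.
  - move=> Sa; apply: nSb.
    have := inv _ k m k0 Sa; rewrite -kE mulrC divfK ?gt_eqF//.
    by rewrite subrK.
set t0 := c - kR * x0 + kR * r.
have ht : t0 <= t < t0 + 1 by rewrite /t /t0; apply/andP; split; lra.
have c1 : Num.ceil t0 <= Num.ceil t by apply: le_ceil_tmp; case/andP: ht.
have c2 : Num.ceil t <= Num.ceil t0 + 1.
  have e1 : Num.ceil (1 : R) = 1 by exact: (intrKceil 1).
  by case/andP: ht => _ /ltW /le_ceil_tmp; rewrite (@ceilDrz _ t0 1) ?rpred1// e1.
have : Num.ceil t = Num.ceil t0 \/ Num.ceil t = Num.ceil t0 + 1 by lia.
rewrite /m0 -/t0; case => e; [left|right]; move: good; rewrite /m e //.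
by rewrite addrK subrK.
Qed.

Lemma affine_measurable (k m : R) (E : set R) : measurable E ->
  measurable [set b : R | E ((b - m) / k)].
Proof.
move=> mE.
have mh : measurable_fun [set: R] (fun b : R => (b - m) / k).
  by apply: measurable_funM => //; apply: measurable_funB.
by rewrite -[X in measurable X]setTI; apply: mh.
Qed.

Lemma key (S : set R) (mS : measurable S)
  (inv : forall a (k m : int), 0 < k -> S a -> S (k%:~R * a + m%:~R)) (x0 : R)
  (hd : (mu (S `&` ball x0 r) * (mu (ball x0 r))^-1)%E @[r --> 0^'+] --> 1%:E)
  (c : R) : mu (~` S `&` `[c, c + 1[) = 0%E.
Proof.
set F := ~` S `&` `[c, c + 1[.
have mF : measurable F by apply: measurableI; [exact: measurableC|exact: measurable_itv].
apply/eqP; rewrite eq_le measure_ge0 andbT; apply/lee_addgt0Pr => e e0; rewrite add0e.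
set eta := e / 4.
have eta0 : 0 < eta by rewrite divr_gt0.
move/fine_cvgP: hd => [_ hr].
have H1 := cvgr_gt _ hr (1 - eta) (_ : 1 - eta < 1).
near (0:R)^'+ => r.
have r0 : 0 < r by near: r; exact: nbhs_right_gt.
have r12 : r <= 2^-1 by near: r; apply: nbhs_right_le; rewrite invr_gt0.
have hrat : 1 - eta < fine (mu (S `&` ball x0 r) * (mu (ball x0 r))^-1)%E.
  near: r; apply: H1; lra.
have mB := measurable_ball x0 r.
have muB := lebesgue_measure_ball x0 (ltW r0).
have fin : mu (S `&` ball x0 r) \is a fin_num.
  rewrite ge0_fin_numE ?measure_ge0//; apply: (@le_lt_trans _ _ (mu (ball x0 r))).
    apply: le_measure; rewrite ?inE//.
    exact: measurableI.
  by rewrite muB ltry.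
set s := fine (mu (S `&` ball x0 r)).
have sE : mu (S `&` ball x0 r) = s%:E by rewrite fineK.
rewrite sE muB inver mulrn_eq0 /= gt_eqF// -EFinM /= in hrat.
have hs : (1 - eta) * (r *+ 2) < s by rewrite -ltr_pdivlMr ?mulrn_wgt0.
have muD : mu (ball x0 r `\` S) = (r *+ 2 - s)%:E.
  rewrite measureD//; last by change (mu (ball x0 r) < +oo)%E; rewrite muB ltry.
  by change (mu (ball x0 r) - mu (ball x0 r `&` S) = (r *+ 2 - s)%:E)%E; rewrite setIC muB sE.
pose k : int := Num.floor ((2 * r)^-1) + 1.
set kR : R := k%:~R.
have k0 : 0 < k.
  have : 0 <= Num.floor ((2 * r)^-1) by rewrite floor_ge0 invr_ge0 mulr_ge0// ltW.
  by rewrite /k; lia.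
have kp : 0 < kR by rewrite /kR ltr0z.
have hk1 : 1 < 2 * r * kR.
  have := lt_succ_floor ((2 * r)^-1); rewrite -/k -/kR => h.
  by rewrite -ltr_pdivrMl ?mulr_gt0// mulr1.
have hk2 : 2 * r * kR <= 2.
  have : kR <= (2 * r)^-1 + 1 by rewrite /kR /k intrD lerD2r floor_le_tmp.
  move=> h; have r2 : 0 < 2 * r by rewrite mulr_gt0.
  have h' : 2 * r * kR <= 2 * r * ((2 * r)^-1 + 1) by rewrite ler_pM2l.
  have e' : 2 * r * ((2 * r)^-1 + 1) = 1 + 2 * r by rewrite mulrDr mulfV ?mulr1 // gt_eqF.
  by move: h'; rewrite e'; lra.
set m0 := Num.ceil (c - kR * x0 + kR * r) - 1.
pose P (m : int) := [set b : R | (ball x0 r `\` S) ((b - m%:~R) / kR)].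
have mBS : measurable (ball x0 r `\` S) by exact: measurableD.
have mP m : measurable (P m) by exact: affine_measurable.
have muP m : mu (P m) = (kR * (r *+ 2 - s))%:E.
  by rewrite /P affine_preimage_measure// muD -EFinM.
have sub : F `<=` P m0 `|` P (m0 + 1).
  move=> b [nSb]; rewrite /= in_itv /= => hb.
  exact: (@cover_step S x0 r kR c b k inv k0 erefl r0 hk1 nSb hb).
apply: (@le_trans _ _ (mu (P m0 `|` P (m0 + 1)))).
  by apply: le_measure => //; rewrite ?inE //; apply: measurableU; apply: mP.
apply: le_trans; first by apply: measureU2; apply: mP.
change (mu (P m0) + mu (P (m0 + 1)%R) <= e%:E)%E.
rewrite !muP -EFinD lee_fin.
have h2 : r *+ 2 - s < eta * (r *+ 2) by move: hs; lra.
have h3 : kR * (r *+ 2 - s) <= kR * (eta * (r *+ 2)) by rewrite ler_pM2l// ltW.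
have h4 : kR * (eta * (r *+ 2)) = eta * (2 * r * kR) by rewrite mulr2n; ring.
have h5 : eta * (2 * r * kR) <= eta * 2 by rewrite ler_pM2l.
rewrite /eta in h4 h5 |- *; move: h3; rewrite h4; lra.
Unshelve. all: by end_near.
Qed.
End K.
Lemma natz_R {R : realType} (n : nat) : ((n%:Z)%:~R : R) = n%:R.
Proof. by rewrite -pmulrn. Qed.

Theorem theorem8 (R : realType) (x : nat -> int) :
  (lebesgue_measure : set R -> \bar R).-negligible [set alpha : R | small_gaps x alpha]
  \/ (lebesgue_measure : set R -> \bar R).-negligible (~` [set alpha : R | small_gaps x alpha]).
Proof.
have -> : [set alpha : R | small_gaps x alpha] = [set a | Sp x a].
  by apply/seteqP; split => a /= /small_gapsP.
set S := [set a : R | Sp x a].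
have mS : measurable S := measurable_Sp x.
have inv : forall a (k m : int), 0 < k -> S a -> S (k%:~R * a + m%:~R).
  by move=> a k m k0; exact: Sp_scale.
case: (pselect ((lebesgue_measure : set R -> \bar R).-negligible S)) => nS; [by left | right].
have hD := lebesgue_density mS.
have [x0 [Sx0 Px0]] : exists x0, S x0 /\
    ((lebesgue_measure (S `&` ball x0 r)) * (lebesgue_measure (ball x0 r))^-1)%E
       @[r --> 0^'+] --> (\1_S x0)%:E.
  apply: contrapT => hne; apply: nS; apply: (negligibleS _ hD) => y Sy Py.
  by apply: hne; exists y.
rewrite indicE mem_set // in Px0.
have K c := @key R S mS inv x0 Px0 c.
pose F (n : nat) := ~` S `&` `[(n%:R : R), n%:R + 1[.
pose G (n : nat) := ~` S `&` `[- (n%:R : R), - n%:R + 1[.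
have mI (c : R) : measurable (~` S `&` `[c, c + 1[).
  by apply: measurableI; [exact: measurableC|exact: measurable_itv].
have nF n : (lebesgue_measure : set R -> \bar R).-negligible (F n).
  by exists (F n); split; [exact: mI | exact: K | ].
have nG n : (lebesgue_measure : set R -> \bar R).-negligible (G n).
  by exists (G n); split; [exact: mI | exact: K | ].
have nU := negligibleU (@negligible_bigcup _ _ _ (@lebesgue_measure R) F nF) (@negligible_bigcup _ _ _ (@lebesgue_measure R) G nG).
apply: (negligibleS _ nU).
move=> y nSy.
have := floor_itv y; set z := Num.floor y => /andP[h1 h2].
case: (leP 0 z) => z0.
- have [n ez] : exists n : nat, z = n%:Z by exists `|z|%N; rewrite gez0_abs.
  rewrite ez intrD natz_R ?mulr1z in h1 h2.
  left; exists n => //; split => //=; rewrite in_itv /= h1 /=.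
  exact: h2.
- have [n ez] : exists n : nat, z = - n%:Z by exists `|z|%N; rewrite ltz0_abs ?opprK.
  rewrite ez intrD intrN natz_R ?mulr1z in h1 h2.
  right; exists n => //; split => //=; rewrite in_itv /= h1 /=.
  exact: h2.
Qed.
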